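(* Let $p$ be a positive integer and consider the $\delta_{p,2}$-filtration of $A_1(\mathbf{C})$ (weights $\Lambda(i,j)=pi+2j$). Let $L$ be a nonzero operator in $A_1(\mathbf{C})$ whose symbol is $\sigma(L)=(\xi^p+\chi^2)^2$. If $M\neq0$ lies in the centralizer of $L$ in $A_1(\mathbf{C})$, then $\mathrm{ord}(M)\equiv 0$ or $\mathrm{ord}(M)\equiv p \pmod{2p}$.
   Context: $A_1(\mathbf{C})$ is the first Weyl algebra of operators $P=\sum a_{ij}x^i\partial^j$, $[\partial,x]=1$; $\mathrm{ord}(P)$ is the degree in $\partial$. With $\Lambda(i,j)=pi+2j$, $\delta(P)=\max\{\Lambda(i,j):a_{ij}\neq0\}$ and the symbol is $\sigma(P)=\sum_{\Lambda(i,j)=\delta(P)}a_{ij}\chi^i\xi^j\in\mathbf{C}[\chi,\xi]$. *)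

(* Defs.v *)
From HB Require Import structures.
From mathcomp Require Import all_boot all_order all_algebra.
Set Implicit Arguments. Unset Strict Implicit. Unset Printing Implicit Defensive.
Import Order.TTheory GRing.Theory Num.Theory.
Local Open Scope ring_scope.

(* An operator
   P = \sum_{i,j} a_ij x^i d^j  is represented in normal form as
   P : {poly {poly R}}, where the outer variable stands for the derivation d
   and P`_j : {poly R} is the polynomial coefficient of d^j (in the variable x);
   thus a_ij = (P`_j)`_i.  Addition is that of {poly {poly R}}; multiplication
   is given by the Leibniz rule  d^j g = \sum_l C(j,l) g^{(l)} d^(j-l),
   which encodes the relation [d, x] = 1. *)

Definition weyl_mul (R : fieldType) (P Q : {poly {poly R}}) : {poly {poly R}} :=
  \sum_(j < size P) \sum_(k < size Q) \sum_(l < j.+1)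
     (((P`_j * (Q`_k)^`(l)) *+ 'C(j, l))%:P * 'X^(j + k - l)).

Definition weyl_ord (R : fieldType) (P : {poly {poly R}}) : nat := (size P).-1.

Definition weyl_coef (R : fieldType) (P : {poly {poly R}}) (i j : nat) : R :=
  (P`_j)`_i.

Definition Lambda (p i j : nat) : nat := (p * i + 2 * j)%N.

Definition weyl_delta (R : fieldType) (p : nat) (P : {poly {poly R}}) : nat :=
  (\max_(j < size P) \max_(i < size (P`_j)%R | weyl_coef P i j != 0%R) Lambda p i j)%N.

(* sigma(P) = \sum_{Lambda(i,j) = delta(P)} a_ij chi^i xi^j in R[chi, xi],
   represented in {poly {poly R}} with outer variable xi and inner variable chi. *)
Definition weyl_symbol (R : fieldType) (p : nat) (P : {poly {poly R}})
  : {poly {poly R}} :=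
  \poly_(j < size P) \poly_(i < size P`_j)
     (if Lambda p i j == weyl_delta p P then weyl_coef P i j else 0).

(* Main.v *)
Require Import Defs.
From HB Require Import structures.
From mathcomp Require Import all_boot all_order all_algebra.
From mathcomp Require Import zify ring.
Import Order.TTheory GRing.Theory Num.Theory.
Local Open Scope ring_scope.

Set Implicit Arguments. Unset Strict Implicit. Unset Printing Implicit Defensive.


Definition wcomp (C : fieldType) (p w : nat) (P : {poly {poly C}}) : {poly {poly C}} :=
  \poly_(j < size P) \poly_(i < size P`_j)
     (if Lambda p i j == w then P`_j`_i else 0).

Definition wle (C : fieldType) (p w : nat) (P : {poly {poly C}}) :=
  forall i j, P`_j`_i != 0 -> (Lambda p i j <= w)%N.

Lemma poly2P (C : fieldType) (P Q : {poly {poly C}}) :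
  (forall i j, P`_j`_i = Q`_j`_i) -> P = Q.
Proof. by move=> H; apply/polyP => j; apply/polyP => i. Qed.

Lemma coef_comp (C : fieldType) p w (P : {poly {poly C}}) i j :
  (wcomp p w P)`_j`_i = if Lambda p i j == w then P`_j`_i else 0.
Proof.
rewrite /wcomp coef_poly; case: ltnP => Hj; last first.
  have -> : P`_j = 0 by rewrite nth_default.
  by rewrite coef0 if_same.
rewrite coef_poly; case: ltnP => Hi //.
have -> : P`_j`_i = 0 by rewrite nth_default.
by rewrite if_same.
Qed.

Lemma symbol_comp (C : fieldType) p (P : {poly {poly C}}) :
  weyl_symbol p P = wcomp p (weyl_delta p P) P.
Proof. by []. Qed.

Lemma compD (C : fieldType) p w (P Q : {poly {poly C}}) :
  wcomp p w (P + Q) = wcomp p w P + wcomp p w Q.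
Proof.
apply: poly2P => i j; rewrite !coefD !coef_comp !coefD.
by case: ifP; rewrite ?addr0.
Qed.

Lemma comp0 (C : fieldType) p w : wcomp p w (0 : {poly {poly C}}) = 0.
Proof. by apply: poly2P => i j; rewrite coef_comp !coef0 if_same. Qed.

Lemma compN (C : fieldType) p w (P : {poly {poly C}}) :
  wcomp p w (- P) = - wcomp p w P.
Proof.
apply: poly2P => i j; rewrite !coefN !coef_comp !coefN.
by case: ifP; rewrite ?oppr0.
Qed.

Lemma compB (C : fieldType) p w (P Q : {poly {poly C}}) :
  wcomp p w (P - Q) = wcomp p w P - wcomp p w Q.
Proof. by rewrite compD compN. Qed.

Lemma comp_sum (C : fieldType) p w n (F : 'I_n -> {poly {poly C}}) :
  wcomp p w (\sum_(l < n) F l) = \sum_(l < n) wcomp p w (F l).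
Proof.
elim/big_rec2: _ => [|l x y _ <-]; first exact: comp0.
by rewrite compD.
Qed.

Lemma comp_gt (C : fieldType) p w T (P : {poly {poly C}}) :
  wle p w P -> (w < T)%N -> wcomp p T P = 0.
Proof.
move=> H wT; apply: poly2P => i j; rewrite coef_comp !coef0.
case: eqP => // E; case: (eqVneq (P`_j`_i) 0) => // /H; lia.
Qed.

Lemma wle_delta (C : fieldType) p (P : {poly {poly C}}) :
  wle p (weyl_delta p P) P.
Proof.
move=> i j nz.
have Hj : (j < size P)%N.
  rewrite ltnNge; apply/negP => /leq_sizeP h; move: nz; by rewrite h // coef0 eqxx.
have Hi : (i < size (P`_j)%R)%N.
  rewrite ltnNge; apply/negP => /leq_sizeP h; move: nz; by rewrite h // eqxx.
rewrite /weyl_delta.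
apply: leq_trans (leq_bigmax (Ordinal Hj)).
by apply: (leq_trans _ (leq_bigmax_cond (Ordinal Hi) _)).
Qed.

Lemma symbol_neq0 (C : fieldType) p (P : {poly {poly C}}) :
  P != 0 -> weyl_symbol p P != 0.
Proof.
move=> nzP; apply/eqP => E.
have H := @wle_delta _ p P.
have all0 : forall i j, P`_j`_i != 0 -> (Lambda p i j < weyl_delta p P)%N.
  move=> i j nz; move: (H _ _ nz); rewrite leq_eqVlt => /orP[/eqP e|//].
  have := congr1 (fun X : {poly {poly C}} => X`_j`_i) E.
  by rewrite /= symbol_comp coef_comp e eqxx !coef0 => e'; rewrite e' eqxx in nz.
case D: (weyl_delta p P) => [|d].
  move: nzP; rewrite (_ : P = 0) ?eqxx //; apply: poly2P => i j; rewrite !coef0.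
  by case: (eqVneq (P`_j`_i) 0) => // /all0; rewrite D.
have : (weyl_delta p P <= d)%N.
  apply/bigmax_leqP => j _; apply/bigmax_leqP => i nz.
  by have := all0 _ _ nz; rewrite /weyl_coef D ltnS.
by rewrite D ltnn.
Qed.



Lemma coef2M (C : fieldType) (P Q : {poly {poly C}}) i j :
  (P * Q)`_j`_i = \sum_(k < j.+1) \sum_(m < i.+1) P`_k`_m * Q`_(j - k)`_(i - m).
Proof. by rewrite coefM coef_sum; apply: eq_bigr => k _; rewrite coefM. Qed.

Lemma Lambda_split p i j m k : (m <= i)%N -> (k <= j)%N ->
  (Lambda p m k + Lambda p (i - m) (j - k) = Lambda p i j)%N.
Proof.
move=> hm hk; rewrite /Lambda.
have e1 : (p * m + p * (i - m) = p * i)%N by rewrite -mulnDr subnKC.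
lia.
Qed.

Lemma sum_nz (R : zmodType) n (F : 'I_n -> R) :
  \sum_(i < n) F i != 0 -> exists i, F i != 0.
Proof.
move=> nz; case: (pickP (fun i => F i != 0)) => [i h|h]; first by exists i.
by move: nz; rewrite big1 ?eqxx // => i _; apply/eqP; move: (h i) => /negbFE.
Qed.

Lemma wle_mul (C : fieldType) p a b (P Q : {poly {poly C}}) :
  wle p a P -> wle p b Q -> wle p (a + b) (P * Q).
Proof.
move=> HP HQ i j; rewrite coef2M => nz.
have [k nzk] := sum_nz nz.
have [m nzm] := sum_nz nzk.
move: nzm; rewrite mulf_eq0 negb_or => /andP[/HP h1 /HQ h2].
rewrite -(@Lambda_split p i j m k) ?leq_addl //; first lia.
  by rewrite -ltnS. by rewrite -ltnS.
Qed.

Lemma comp_mul (C : fieldType) p a b (P Q : {poly {poly C}}) :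
  wle p a P -> wle p b Q -> wcomp p (a + b) (P * Q) = wcomp p a P * wcomp p b Q.
Proof.
move=> HP HQ; apply: poly2P => i j.
rewrite coef_comp !coef2M.
have -> : (if Lambda p i j == (a + b)%N
   then \sum_(k < j.+1) \sum_(m < i.+1) P`_k`_m * Q`_(j - k)`_(i - m) else 0) =
   \sum_(k < j.+1) \sum_(m < i.+1)
     (if Lambda p i j == (a + b)%N then P`_k`_m * Q`_(j - k)`_(i - m) else 0).
  case: ifP => _ //; by rewrite big1 // => k _; rewrite big1.
apply: eq_bigr => k _; apply: eq_bigr => m _; rewrite !coef_comp.
have hk : (k <= j)%N by rewrite -ltnS.
have hm : (m <= i)%N by rewrite -ltnS.
have S := Lambda_split p hm hk.
case: (eqVneq (P`_k`_m) 0) => [->|nP]; first by rewrite !mul0r !if_same mul0r.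
case: (eqVneq (Q`_(j - k)`_(i - m)) 0) => [->|nQ]; first by rewrite !mulr0 !if_same mulr0.
have h1 := HP _ _ nP; have h2 := HQ _ _ nQ.
by case: eqP => e1; case: eqP => e2; case: eqP => e3 //; rewrite ?mul0r ?mulr0 //; lia.
Qed.

Definition Exi (C : fieldType) (P : {poly {poly C}}) : {poly {poly C}} := 'X * P^`().
Definition Dchi (C : fieldType) l (P : {poly {poly C}}) : {poly {poly C}} :=
  map_poly (derivn l) P.
Definition Echi (C : fieldType) (P : {poly {poly C}}) : {poly {poly C}} :=
  ('X)%:P * Dchi 1 P.

Lemma coef_Exi (C : fieldType) (P : {poly {poly C}}) i j :
  (Exi P)`_j`_i = P`_j`_i *+ j.
Proof.
rewrite /Exi coefXM; case: j => [|j] /=; first by rewrite coef0 mulr0n.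
by rewrite coef_deriv coefMn.
Qed.

Lemma coef_Dchi (C : fieldType) l (P : {poly {poly C}}) i j :
  (Dchi l P)`_j`_i = P`_j`_(l + i) *+ (l + i) ^_ l.
Proof. by rewrite /Dchi coef_map coef_derivn. Qed.

Lemma coef_Echi (C : fieldType) (P : {poly {poly C}}) i j :
  (Echi P)`_j`_i = P`_j`_i *+ i.
Proof.
rewrite /Echi coefCM coefXM; case: i => [|i] /=; first by rewrite mulr0n.
by rewrite coef_Dchi add1n ffactn1.
Qed.

Lemma comp_Exi (C : fieldType) p w (P : {poly {poly C}}) :
  wcomp p w (Exi P) = Exi (wcomp p w P).
Proof.
apply: poly2P => i j; rewrite coef_comp !coef_Exi coef_comp.
by case: ifP; rewrite ?mul0rn.
Qed.

Lemma comp_Echi (C : fieldType) p w (P : {poly {poly C}}) :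
  wcomp p w (Echi P) = Echi (wcomp p w P).
Proof.
apply: poly2P => i j; rewrite coef_comp !coef_Echi coef_comp.
by case: ifP; rewrite ?mul0rn.
Qed.

Lemma wle_Exi (C : fieldType) p w (P : {poly {poly C}}) :
  wle p w P -> wle p w (Exi P).
Proof.
move=> H i j; rewrite coef_Exi => nz; apply: H; apply: contraNneq nz => ->.
by rewrite mul0rn.
Qed.

Lemma wle_Echi (C : fieldType) p w (P : {poly {poly C}}) :
  wle p w P -> wle p w (Echi P).
Proof.
move=> H i j; rewrite coef_Echi => nz; apply: H; apply: contraNneq nz => ->.
by rewrite mul0rn.
Qed.



Lemma nderivn_expand (C : fieldType) l (P : {poly {poly C}}) :
  P^`N(l) = \sum_(j < size P) (P`_j *+ 'C(j, l)) *: 'X^(j - l).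
Proof.
rewrite {1}(_ : P = \sum_(j < size P) P`_j *: 'X^j); last by rewrite -poly_def coefK.
elim/big_rec2: _ => [|j x y _ <-]; first by rewrite nderivn_poly0 // size_poly0.
by rewrite nderivnD nderivnZ nderivnXn -scalerMnr scalerMnl.
Qed.

Lemma Dchi_expand (C : fieldType) l (Q : {poly {poly C}}) :
  Dchi l Q = \sum_(k < size Q) (Q`_k)^`(l) *: 'X^k.
Proof.
rewrite -(poly_def (size Q) (fun k => (Q`_k)^`(l))); apply/polyP => k; by [].
Qed.

Lemma moyal (C : fieldType) (P Q : {poly {poly C}}) N : (size P <= N)%N ->
  weyl_mul P Q = \sum_(l < N) P^`N(l) * Dchi l Q.
Proof.
move=> hN.
pose G (j k l : nat) := ((P`_j * (Q`_k)^`(l)) *+ 'C(j, l)) *: ('X^(j + k - l) : {poly {poly C}}).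
have E1 : weyl_mul P Q = \sum_(j < size P) \sum_(k < size Q) \sum_(l < N) G j k l.
  rewrite /weyl_mul; apply: eq_bigr => j _; apply: eq_bigr => k _.
  rewrite (eq_bigr (fun l : 'I_j.+1 => G j k l)); last by move=> l _; rewrite /G mul_polyC.
  rewrite (@big_ord_widen _ _ _ j.+1 N (fun l => G j k l)); last exact: leq_trans (ltn_ord j) hN.
  rewrite big_mkcond /=; apply: eq_bigr => l _.
  case: ifP => hl //.
  by rewrite /G bin_small ?mulr0n ?scale0r //; lia.
rewrite E1 (eq_bigr (fun j : 'I_(size P) => \sum_(l < N) \sum_(k < size Q) G j k l)); last first.
  by move=> j _; rewrite exchange_big.
rewrite exchange_big /=; apply: eq_bigr => l _.
rewrite nderivn_expand Dchi_expand big_distrl /=.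
apply: eq_bigr => j _; rewrite big_distrr /=; apply: eq_bigr => k _.
rewrite -scalerAl -scalerAr scalerA -exprD mulrnAl /G.
case: (leqP l j) => hl; first by congr (_ *: 'X^_); lia.
by rewrite bin_small // !mulr0n !scale0r.
Qed.

Lemma wle_nderivn (C : fieldType) p w l (P : {poly {poly C}}) i j :
  wle p w P -> (P^`N(l))`_j`_i != 0 -> (Lambda p i j + 2 * l <= w)%N.
Proof.
move=> H; rewrite coef_nderivn coefMn => nz.
have nz' : P`_(l + j)`_i != 0 by apply: contraNneq nz => ->; rewrite mul0rn.
have := H _ _ nz'; rewrite /Lambda; lia.
Qed.

Lemma wle_Dchi (C : fieldType) p w l (P : {poly {poly C}}) i j :
  wle p w P -> (Dchi l P)`_j`_i != 0 -> (Lambda p i j + p * l <= w)%N.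
Proof.
move=> H; rewrite coef_Dchi => nz.
have nz' : P`_j`_(l + i) != 0 by apply: contraNneq nz => ->; rewrite mul0rn.
have := H _ _ nz'; rewrite /Lambda mulnDr; lia.
Qed.

Definition Xxi (C : fieldType) : {poly {poly C}} := 'X.
Definition Xchi (C : fieldType) : {poly {poly C}} := ('X)%:P.

Lemma coef_Xxi (C : fieldType) (P : {poly {poly C}}) i j :
  (Xxi C * P)`_j`_i = if j == 0%N then 0 else P`_j.-1`_i.
Proof. rewrite /Xxi coefXM; case: (j == 0%N) => //; exact: coef0. Qed.

Lemma coef_Xchi (C : fieldType) (P : {poly {poly C}}) i j :
  (Xchi C * P)`_j`_i = if i == 0%N then 0 else P`_j`_i.-1.
Proof. by rewrite /Xchi coefCM coefXM. Qed.

Lemma high_vanish (C : fieldType) p a b l (P Q : {poly {poly C}}) :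
  (0 < p)%N -> (2 <= l)%N -> wle p a P -> wle p b Q ->
  wcomp p (a + b) (Xchi C * Xxi C * (P^`N(l) * Dchi l Q)) = 0.
Proof.
move=> p0 l2 HP HQ.
rewrite (_ : Xchi C * Xxi C * (P^`N(l) * Dchi l Q) =
   (Xxi C * P^`N(l)) * (Xchi C * Dchi l Q)); last first.
  by rewrite (mulrC (Xchi C)) mulrACA.
case: (leqP (2 * l) a) => ha; last first.
  suff -> : P^`N(l) = 0 by rewrite mulr0 mul0r; exact: comp0.
  apply: poly2P => i j; rewrite !coef0.
  apply/eqP/negPn/negP => nz.
  by have := wle_nderivn HP nz; lia.
case: (leqP (p * l) b) => hb; last first.
  suff -> : Dchi l Q = 0 by rewrite mulr0 mulr0; exact: comp0.
  apply: poly2P => i j; rewrite !coef0.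
  apply/eqP/negPn/negP => nz.
  by have := wle_Dchi HQ nz; lia.
apply: (@comp_gt _ _ (a - 2 * l + 2 + (b - p * l + p))); last first.
  have : (p * 2 <= p * l)%N by rewrite leq_mul2l l2 orbT.
  lia.
apply: wle_mul.
  move=> i j; rewrite coef_Xxi; case: j => [|j] /=; first by rewrite eqxx.
  move=> /(wle_nderivn HP); rewrite /Lambda; lia.
move=> i j; rewrite coef_Xchi; case: i => [|i] /=; first by rewrite eqxx.
move=> /(wle_Dchi HQ); rewrite /Lambda; lia.
Qed.

Lemma one_term (C : fieldType) p a b (P Q : {poly {poly C}}) :
  wle p a P -> wle p b Q ->
  wcomp p (a + b) (Xchi C * Xxi C * (P^`N(1) * Dchi 1 Q)) =
  Exi (wcomp p a P) * Echi (wcomp p b Q).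
Proof.
move=> HP HQ.
rewrite (_ : Xchi C * Xxi C * (P^`N(1) * Dchi 1 Q) = Exi P * Echi Q); last first.
  rewrite /Exi /Echi nderivn1 -/(Xxi C) -/(Xchi C).
  by rewrite (mulrC (Xchi C)) mulrACA.
by rewrite comp_mul ?comp_Exi ?comp_Echi //; [apply: wle_Exi | apply: wle_Echi].
Qed.



Lemma coef_Dchi1 (C : fieldType) l (P : {poly {poly C}}) j :
  (Dchi l P)`_j = (P`_j)^`(l).
Proof. by rewrite /Dchi coef_map. Qed.

Lemma Dchi0 (C : fieldType) (P : {poly {poly C}}) : Dchi 0 P = P.
Proof. by apply/polyP => j; rewrite coef_Dchi1 derivn0. Qed.

Lemma deriv_sum (C : fieldType) n (F : 'I_n -> {poly C}) :
  (\sum_(i < n) F i)^`() = \sum_(i < n) (F i)^`().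
Proof. by elim/big_rec2: _ => [|i x y _ <-]; rewrite ?deriv0 ?derivD. Qed.

Lemma Dchi1M (C : fieldType) (P Q : {poly {poly C}}) :
  Dchi 1 (P * Q) = Dchi 1 P * Q + P * Dchi 1 Q.
Proof.
apply/polyP => j; rewrite coefD coef_Dchi1 !coefM derivn1 deriv_sum -big_split.
apply: eq_bigr => k _; by rewrite !coef_Dchi1 !derivn1 derivM.
Qed.

Lemma Exi_f (C : fieldType) p : (0 < p)%N ->
  Exi ('X^p + ('X^2)%:P : {poly {poly C}}) = 'X^p *+ p.
Proof.
move=> p0; rewrite /Exi derivD derivC addr0 derivXn mulrnAr -exprS prednK //.
Qed.

Lemma Echi_f (C : fieldType) p :
  Echi ('X^p + ('X^2)%:P : {poly {poly C}}) = ('X^2 *+ 2)%:P.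
Proof.
rewrite /Echi (_ : Dchi 1 ('X^p + ('X^2)%:P : {poly {poly C}}) = ('X *+ 2)%:P).
  by rewrite -polyCM mulrnAr -expr2.
apply/polyP => j; rewrite coef_Dchi1 derivn1 coefD coefXn !coefC.
case: (j == p); case: (j == 0%N); rewrite ?addr0 ?add0r ?derivD ?deriv0 ?derivXn //=.
- by rewrite (_ : 1%:R = (1 : C)%:P) // derivC add0r.
- by rewrite (_ : 1%:R = (1 : C)%:P) // derivC.
Qed.

Lemma Exi_sq (C : fieldType) (f : {poly {poly C}}) : Exi (f ^+ 2) = (f * Exi f) *+ 2.
Proof. by rewrite /Exi expr2 derivM (mulrC (f^`()) f) -mulr2n mulrnAr mulrCA. Qed.

Lemma Echi_sq (C : fieldType) (f : {poly {poly C}}) : Echi (f ^+ 2) = (f * Echi f) *+ 2.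
Proof. by rewrite /Echi expr2 Dchi1M (mulrC (Dchi 1 f) f) -mulr2n mulrnAr mulrCA. Qed.



Lemma bracket (C : fieldType) p (L M : {poly {poly C}}) :
  (0 < p)%N -> L != 0 -> M != 0 -> weyl_mul L M = weyl_mul M L ->
  Exi (weyl_symbol p L) * Echi (weyl_symbol p M)
  - Exi (weyl_symbol p M) * Echi (weyl_symbol p L) = 0.
Proof.
move=> p0 nL nM H.
have HL := @wle_delta _ p L; have HM := @wle_delta _ p M.
set a := weyl_delta p L in HL *; set b := weyl_delta p M in HM *.
have sL : (0 < size L)%N by rewrite size_poly_gt0.
have sM : (0 < size M)%N by rewrite size_poly_gt0.
have [n hn] : exists n, (size L + size M = n.+2)%N.
  by exists (size L + size M).-2; lia.
have H0 : \sum_(l < n.+2) (L^`N(l) * Dchi l M - M^`N(l) * Dchi l L) = 0.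
  rewrite sumrB -moyal; last lia.
  by rewrite -moyal ?H ?subrr //; lia.
have := congr1 (fun X => wcomp p (a + b) (Xchi C * Xxi C * X)) H0.
rewrite /= mulr0 comp0 mulr_sumr comp_sum 2!big_ord_recl big1; last first.
  move=> i _; rewrite mulrBr compB (@high_vanish _ p a b) //.
  by rewrite addnC (@high_vanish _ p b a) ?subrr // /= /bump.
rewrite /= !nderivn0 !Dchi0 (mulrC M L) subrr mulr0 comp0 add0r addr0.
rewrite mulrBr compB one_term // addnC one_term //.
Qed.



Lemma key_eq (C : numClosedFieldType) p (L M : {poly {poly C}}) :
  (0 < p)%N -> L != 0 ->
  weyl_symbol p L = ('X^p + ('X^2)%:P) ^+ 2 ->
  M != 0 -> weyl_mul L M = weyl_mul M L ->
  forall i j,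
  (if (j < p)%N then 0 else (weyl_symbol p M)`_(j - p)`_i *+ i) *+ p =
  (if (i < 2)%N then 0 else (weyl_symbol p M)`_j`_(i - 2) *+ j) *+ 2.
Proof.
move=> p0 nL HL nM H i j.
have B := bracket p0 nL nM H.
set g := weyl_symbol p M in B *.
set f : {poly {poly C}} := 'X^p + ('X^2)%:P in HL.
rewrite HL Exi_sq Echi_sq Exi_f // Echi_f in B.
set Y := ('X^p * Echi g) *+ p - (('X^2)%:P * Exi g) *+ 2.
have fY : f * (Y *+ 2) = 0.
  by rewrite -B /Y rmorphMn /=; ring.
have nf : f != 0.
  have f1 : f`_p = 1 by rewrite /f coefD coefXn eqxx coefC (negbTE (lt0n_neq0 p0)) addr0.
  by apply/eqP => e; move: f1; rewrite e coef0 => /eqP; rewrite eq_sym oner_eq0.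
have E1 : (('X^p * Echi g)`_j)`_i = if (j < p)%N then 0 else g`_(j - p)`_i *+ i.
  by rewrite (coefXnM p (Echi g) j); case: ifP; rewrite ?coef0 ?coef_Echi.
have E2 : ((('X^2)%:P * Exi g)`_j)`_i = if (i < 2)%N then 0 else g`_j`_(i - 2) *+ j.
  rewrite (coefCM ('X^2) (Exi g) j) coefXnM; case: ifP => //; by rewrite coef_Exi.
move: fY => /eqP; rewrite mulf_eq0 (negbTE nf) /= => /eqP /(congr1 (fun X : {poly {poly C}} => X`_j`_i)).
rewrite coef0 coefMn coefMn coef0 /Y !coefB !coefMn E1 E2.
move=> /eqP; rewrite mulrn_eq0 /= subr_eq0 => /eqP ->.
by [].
Qed.



Lemma poly2_nz (C : fieldType) (P : {poly {poly C}}) :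
  P != 0 -> exists i j, P`_j`_i != 0.
Proof.
move=> nz; case: (boolP [exists j : 'I_(size P), exists i : 'I_(size (P`_j)%R), P`_j`_i != 0]).
  by move=> /existsP[j /existsP[i h]]; exists i, j.
move=> /existsPn h; case/eqP: nz; apply: poly2P => i j; rewrite coef0 coef0.
case: (ltnP j (size P)) => hj; last first.
  have -> : P`_j = 0 by rewrite nth_default.
  by rewrite coef0.
case: (ltnP i (size (P`_j)%R)) => hi; last first.
  by rewrite nth_default.
by move: (h (Ordinal hj)) => /existsPn /(_ (Ordinal hi)) /negPn /eqP.
Qed.

Unset Implicit Arguments.
Set Strict Implicit.

(* In weyl_symbol, outer 'X = xi, inner 'X = chi:  sigma(L) = (xi^p + chi^2)^2. *)
Theorem mainTheorem6 (C : numClosedFieldType) (p : nat) (L M : {poly {poly C}}) :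
  (0 < p)%N ->
  L != 0 ->
  weyl_symbol p L = ('X^p + ('X^2)%:P) ^+ 2 ->
  M != 0 ->
  weyl_mul L M = weyl_mul M L ->
  weyl_ord M = 0 %[mod 2 * p] \/ weyl_ord M = p %[mod 2 * p].
Proof.
move=> p0 nL HL nM H.
have K := key_eq p0 nL HL nM H.
have gnz := symbol_neq0 p nM.
have HM := @wle_delta _ p M.
set g := weyl_symbol p M in K gnz.
set D := weyl_delta p M in HM.
have hg : forall i j, g`_j`_i = if Lambda p i j == D then M`_j`_i else 0.
  by move=> i j; rewrite /g symbol_comp coef_comp.
have mn : forall (x : C) n, x != 0 -> (0 < n)%N -> x *+ n != 0.
  by move=> x n hx hn; rewrite mulrn_eq0 negb_or hx -lt0n hn.
have step1 : forall n i j, (i <= n)%N -> g`_j`_i != 0 -> exists J, g`_J`_0 != 0.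
  elim=> [|n IH] [|[|k]] j hi h; try (by exists j); try (exfalso; lia).
  - have := K 1%N (j + p)%N.
    rewrite ltnNge leq_addl /= addnK /= mul0rn.
    have h1 : g`_j`_1 *+ 1 *+ p != 0 by apply: mn => //; apply: mn.
    by move/eqP; rewrite (negbTE h1).
  - have := K k.+2 (j + p)%N.
    rewrite ltnNge leq_addl /= addnK /= => e.
    rewrite (_ : (k.+2 - 2 = k)%N) in e; last lia.
    apply: (IH k (j + p)%N); first lia.
    have h1 := mn _ _ (mn _ _ h (ltn0Sn k.+1)) p0.
    apply/eqP => e0; move: h1; by rewrite e e0 !mul0rn eqxx.
have [i0 [j0 nz0]] := poly2_nz gnz.
have [J hJ] := step1 i0 i0 j0 (leqnn _) nz0.
have hJ' := hJ; rewrite hg in hJ'.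
have eJ : Lambda p 0 J = D.
  apply/eqP; apply: contraTT hJ' => /negbTE ->; by rewrite eqxx.
have hMJ : M`_J`_0 != 0 by move: hJ'; rewrite eJ eqxx.
have eD : D = (2 * J)%N by rewrite -eJ /Lambda muln0.
have ordJ : weyl_ord M = J.
  rewrite /weyl_ord; apply/eqP; rewrite -eqSS prednK; last first.
    by rewrite size_poly_gt0.
  rewrite eqn_leq; apply/andP; split.
    apply/leq_sizeP => j hj; apply/polyP => i; rewrite coef0.
    apply/eqP/negPn/negP => nz; have := HM _ _ nz; rewrite eD /Lambda; lia.
  rewrite ltnNge; apply/negP => h; move: hMJ.
  by rewrite (nth_default _ h) coef0 eqxx.
have step3 : forall t, (t * p <= J)%N -> g`_(J - t * p)`_(2 * t) != 0.
  elim=> [|t IH] ht; first by rewrite mul0n subn0 muln0.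
  have ht' : (t * p + p <= J)%N by move: ht; rewrite mulSn addnC.
  have := K (2 * t.+1)%N (J - t * p)%N.
  rewrite ltnNge (_ : (p <= J - t * p)%N) /=; last lia.
  rewrite ltnNge (_ : (2 <= 2 * t.+1)%N) /=; last lia.
  rewrite (_ : (J - t * p - p = J - t.+1 * p)%N); last by rewrite mulSn; lia.
  rewrite (_ : (2 * t.+1 - 2 = 2 * t)%N); last lia.
  have ht0 : (t * p <= J)%N by lia.
  have hp0 : (0 < J - t * p)%N by lia.
  have h1 := mn _ _ (mn _ _ (IH ht0) hp0) (isT : (0 < 2)%N).
  move=> e; apply/eqP => e0; move: h1; by rewrite -e e0 !mul0rn eqxx.
set t := (J %/ p)%N.
have hJt : J = (t * p + J %% p)%N by rewrite /t -divn_eq.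
have r0 : (J %% p = 0)%N.
  apply/eqP; apply: contraT => hr; rewrite -lt0n in hr.
  have := step3 t (leq_divM _ _); rewrite {1}hJt addKn => h3.
  have := K (2 * t).+2 (J %% p)%N.
  rewrite ltn_pmod //= mul0rn (_ : ((2 * t).+2 - 2 = 2 * t)%N); last lia.
  have h1 := mn _ _ (mn _ _ h3 hr) (isT : (0 < 2)%N).
  by move=> e; move: h1; rewrite -e eqxx.
rewrite ordJ hJt r0 addn0.
have ht : t = (t %/ 2 * 2 + odd t)%N by rewrite -modn2 -divn_eq.
rewrite ht !mulnDl -!mulnA !modnMDl.
by case: (odd t); [right; rewrite mul1n | left; rewrite mul0n].
Qed.
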